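(* Let $\sigma_0,\sigma_\epsilon,\sigma_1,\dots,\sigma_k>0$, $\Delta_1,\dots,\Delta_k\in\mathbb{R}$, and weights $\phi_\epsilon>0$, $\phi_1,\dots,\phi_k\ge0$ with $\phi_\epsilon+\sum_i\phi_i=1$. Let the prior be $\Theta\sim N(0,\sigma_0^2)$ and the signal likelihood be the Gaussian mixture $$l_{X|\Theta}(x\mid\theta)=\phi_\epsilon\,\varphi(x;\theta,\sigma_\epsilon^2)+\sum_{i=1}^k\phi_i\,\varphi(x;\Delta_i,\sigma_i^2),$$ where $\varphi(x;\mu,s^2)$ is the $N(\mu,s^2)$ density. Let $\theta_1(x)$ be the posterior mean of $\Theta$ given $X=x$. Then the DeGroot coefficient $\omega_m=\frac{d\theta_1}{dx}\big|_{x=0}$ is $$\omega_m=\frac{\omega_{nm}}{1+\sum_{i=1}^k\frac{\phi_i}{\phi_\epsilon}\frac{\sqrt{\sigma_0^2+\sigma_\epsilon^2}}{\sigma_i}\exp\!\bigl(-\frac{\Delta_i^2}{2\sigma_i^2}\bigr)},\qquad \omega_{nm}=\frac{\sigma_0^2}{\sigma_0^2+\sigma_\epsilon^2}.$$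
   Context: The posterior mean is $\theta_1(x)=\frac{\int\theta f_\Theta(\theta)l_{X|\Theta}(x\mid\theta)d\theta}{\int f_\Theta(\theta)l_{X|\Theta}(x\mid\theta)d\theta}$ with $f_\Theta$ the $N(0,\sigma_0^2)$ density. *)

(* Defs.v *)
From Stdlib Require Import Reals.
From Coquelicot Require Import Coquelicot.
Open Scope R_scope.

Fixpoint fsum (k : nat) (f : nat -> R) : R :=
  match k with
  | O => 0
  | S n => fsum n f + f n
  end.

Definition gauss (mu s x : R) : R :=
  / (s * sqrt (2 * PI)) * exp (- (x - mu) ^ 2 / (2 * s ^ 2)).

(* Gaussian-mixture likelihood l_{X|Theta}(x | theta); mixture components indexed 0..k-1 *)
Definition lik (k : nat) (phie se : R) (phi Delta sig : nat -> R) (x theta : R) : R :=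
  phie * gauss theta se x + fsum k (fun i => phi i * gauss (Delta i) (sig i) x).

Definition post_mean (s0 : R) (k : nat) (phie se : R) (phi Delta sig : nat -> R) (x : R) : R :=
  RInt_gen (fun t => t * gauss 0 s0 t * lik k phie se phi Delta sig x t)
           (Rbar_locally m_infty) (Rbar_locally p_infty)
  / RInt_gen (fun t => gauss 0 s0 t * lik k phie se phi Delta sig x t)
           (Rbar_locally m_infty) (Rbar_locally p_infty).

(* Main.v *)
Require Import Defs.
From Stdlib Require Import Reals Lra Psatz.
From Coquelicot Require Import Coquelicot.
Open Scope R_scope.

Lemma cont_of_der (f : R -> R) x : ex_derive f x -> continuous f x.
Proof. apply (@ex_derive_continuous R_AbsRing R_NormedModule). Qed.

Lemma exR (f : R -> R) a b : (forall z, Rmin a b <= z <= Rmax a b -> continuous f z) -> ex_RInt f a b.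
Proof. apply (@ex_RInt_continuous R_CompleteNormedModule). Qed.

Definition gf (t : R) := exp (- t ^ 2).
Definition E (x : R) := RInt gf 0 x.

Lemma gf_cont x : continuous gf x.
Proof. apply cont_of_der. unfold gf. auto_derive. easy. Qed.

Lemma gf_exRInt a b : ex_RInt gf a b.
Proof. apply exR. intros; apply gf_cont. Qed.

Lemma E_deriv x : is_derive E x (gf x).
Proof.
  apply (is_derive_RInt gf E 0).
  - apply filter_forall. intros b. unfold E. apply (@RInt_correct R_CompleteNormedModule), gf_exRInt.
  - apply gf_cont.
Qed.

Definition u (x t : R) := exp (- x ^ 2 * (1 + t ^ 2)) / (1 + t ^ 2).
Definition I (x : R) := RInt (u x) 0 1.

Lemma Du x t : is_derive (fun z => u z t) x (- 2 * x * exp (- x ^ 2 * (1 + t ^ 2))).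
Proof.
  unfold u. auto_derive.
  - nra.
  - cbv beta; set (e := exp _). set (w := 1 + t * (t*1)). change (1 + t^2) with w. assert (w <> 0) by (unfold w; nra). field_simplify; auto.
Qed.

Lemma cont2_Du x t : continuity_2d_pt (fun a b => - 2 * a * exp (- a ^ 2 * (1 + b ^ 2))) x t.
Proof.
  apply continuity_2d_pt_mult.
  - apply continuity_2d_pt_mult. apply continuity_2d_pt_const. apply continuity_2d_pt_id1.
  - apply (continuity_1d_2d_pt_comp exp).
    + apply derivable_continuous_pt, derivable_pt_exp.
    + apply (continuity_2d_pt_ext (fun a b => - (a * a) * (1 + b * b))).
      { intros; ring. }
      apply continuity_2d_pt_mult.
      * apply continuity_2d_pt_opp, continuity_2d_pt_mult; apply continuity_2d_pt_id1.
      * apply continuity_2d_pt_plus. apply continuity_2d_pt_const.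
        apply continuity_2d_pt_mult; apply continuity_2d_pt_id2.
Qed.

Lemma u_cont x t : continuous (u x) t.
Proof. apply cont_of_der. unfold u. auto_derive. nra. Qed.

Lemma dI x : is_derive I x (-2 * gf x * E x).
Proof.
  assert (H := is_derive_RInt_param u 0 1 x).
  unfold I.
  replace (-2 * gf x * E x) with (RInt (fun t => Derive (fun u0 => u u0 t) x) 0 1).
  apply H.
  - apply filter_forall. intros x0 t _. eexists. apply Du.
  - intros t _. apply (continuity_2d_pt_ext (fun a b => - 2 * a * exp (- a ^ 2 * (1 + b ^ 2)))).
    + intros a b. symmetry. apply is_derive_unique, Du.
    + apply cont2_Du.
  - apply filter_forall. intros y. apply exR. intros; apply u_cont.
  - rewrite (RInt_ext _ (fun t => scal (-2 * gf x) (scal x (gf (x * t + 0))))).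
    + rewrite (@RInt_scal R_CompleteNormedModule). rewrite (@RInt_comp_lin R_CompleteNormedModule).
      * unfold E. rewrite !Rmult_0_r, !Rmult_1_r, !Rplus_0_r. reflexivity.
      * apply gf_exRInt.
      * apply (ex_RInt_comp_lin gf x 0 0 1). apply gf_exRInt.
    + intros t _. replace (Derive (fun u0 => u u0 t) x) with (- 2 * x * exp (- x ^ 2 * (1 + t ^ 2))) by (symmetry; apply is_derive_unique, Du). unfold scal; simpl; unfold mult; simpl.
      unfold gf. assert (HH : exp (- x ^ 2) * exp (- (x * t + 0) ^ 2) = exp (- (x * (x * 1)) * (1 + t * (t * 1)))).
      { rewrite <- exp_plus. f_equal. ring. }
      rewrite <- HH. ring.
Qed.

Definition h x := I x + E x * E x.

Lemma dh x : is_derive h x 0.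
Proof.
  unfold h.
  replace 0 with (-2 * gf x * E x + (gf x * E x + E x * gf x)) by ring.
  apply (@is_derive_plus R_AbsRing R_NormedModule). apply dI.
  apply (@is_derive_mult R_AbsRing); try apply E_deriv.
  intros; simpl. unfold mult; simpl. ring.
Qed.

Lemma h_const x : h x = h 0.
Proof.
  assert (H1 : is_RInt (fun _ => 0) 0 x (minus (h x) (h 0))).
  { apply (@is_RInt_derive R_CompleteNormedModule h (fun _ => 0)).
    - intros; apply dh.
    - intros; apply continuous_const. }
  assert (H2 : is_RInt (fun _ : R => 0) 0 x (scal (x - 0) 0)) by apply (@is_RInt_const R_NormedModule).
  assert (H3 := is_RInt_unique _ _ _ _ H1). rewrite (is_RInt_unique _ _ _ _ H2) in H3.
  unfold minus, plus, opp, scal in H3; simpl in H3. unfold mult in H3; simpl in H3. lra.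
Qed.

Lemma h0 : h 0 = PI / 4.
Proof.
  unfold h, I, E. rewrite RInt_point. unfold zero; simpl.
  rewrite (RInt_ext _ (fun t => / (1 + t ^ 2))).
  - rewrite (is_RInt_unique _ 0 1 (minus (atan 1) (atan 0))). 
    + rewrite atan_1, atan_0. unfold minus, plus, opp; simpl. ring.
    + apply (@is_RInt_derive R_CompleteNormedModule atan).
      * intros. replace (x ^ 2) with (x²) by (unfold Rsqr; ring). apply is_derive_atan.
      * intros. apply cont_of_der. auto_derive. nra.
  - intros t _. unfold u. replace (- 0 ^ 2 * (1 + t ^ 2)) with 0 by ring. rewrite exp_0. unfold Rdiv. apply Rmult_1_l.
Qed.

Lemma exp_le a b : a <= b -> exp a <= exp b.
Proof. intros H. destruct (Rle_lt_or_eq_dec _ _ H). left; apply exp_increasing; auto. subst; lra. Qed.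

Lemma lim_sq_inf (z : Rbar) : z = p_infty \/ z = m_infty -> is_lim (fun y => - y ^ 2) z m_infty.
Proof.
  intros Hz.
  apply (is_lim_ext (fun y => - (y * y))). { intros; ring. }
  replace m_infty with (Rbar_opp p_infty) by reflexivity.
  apply is_lim_opp.
  assert (H : is_lim (fun y => y * y) z (Rbar_mult z z)).
  { apply is_lim_mult; try apply is_lim_id. destruct Hz; subst; simpl; auto. }
  destruct Hz; subst; simpl in H; exact H.
Qed.

Lemma lim_gf (z : Rbar) : z = p_infty \/ z = m_infty -> is_lim gf z 0.
Proof.
  intros Hz. unfold gf.
  eapply is_lim_comp. apply is_lim_exp_m. apply lim_sq_inf, Hz.
  destruct Hz; subst; exists 0; intros; discriminate.
Qed.

Lemma I_bounds x : 0 <= I x <= gf x.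
Proof.
  unfold I. split.
  - apply RInt_ge_0. lra. apply exR; intros; apply u_cont.
    intros t _. unfold u. apply Rdiv_le_0_compat. apply Rlt_le, exp_pos. nra.
  - replace (gf x) with (RInt (fun _ => gf x) 0 1).
    + apply RInt_le. lra. apply exR; intros; apply u_cont. apply ex_RInt_const.
      intros t Ht. unfold u, gf.
      apply Rle_trans with (exp (- x ^ 2 * (1 + t ^ 2))).
      * unfold Rdiv. rewrite <- (Rmult_1_r (exp _)) at 2. apply Rmult_le_compat_l. apply Rlt_le, exp_pos.
        rewrite <- Rinv_1. apply Rinv_le_contravar. lra. nra.
      * apply exp_le. nra.
    + rewrite RInt_const. unfold scal; simpl; unfold mult; simpl. ring.
Qed.

Lemma E_ge0 x : 0 <= x -> 0 <= E x.
Proof.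
  intros Hx. unfold E. apply RInt_ge_0. auto. apply gf_exRInt.
  intros; apply Rlt_le, exp_pos.
Qed.

Lemma sqrtPI4 : sqrt (PI / 4 - 0) = sqrt PI / 2.
Proof.
  apply sqrt_lem_1.
  - assert (PI > 0) by apply PI_RGT_0. lra.
  - assert (0 <= sqrt PI) by apply sqrt_pos. lra.
  - assert (sqrt PI * sqrt PI = PI) by (apply sqrt_sqrt; apply Rlt_le, PI_RGT_0). nra.
Qed.

Lemma E_lim_p : is_lim E p_infty (sqrt PI / 2).
Proof.
  assert (HI : is_lim I p_infty 0).
  { apply (is_lim_le_le_loc (fun _ => 0) gf).
    - exists 0. intros; apply I_bounds.
    - apply is_lim_const.
    - apply lim_gf; auto. }
  rewrite <- sqrtPI4.
  apply (is_lim_ext_loc (fun x => sqrt (PI / 4 - I x))).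
  - exists 0. intros x Hx. assert (H := h_const x). rewrite h0 in H. unfold h in H.
    replace (PI / 4 - I x) with (E x * E x) by lra. apply sqrt_square, E_ge0. lra.
  - apply (is_lim_comp_continuous I (fun y => sqrt (PI / 4 - y))). apply HI.
    apply (continuous_comp (fun y => PI / 4 - y) sqrt). apply cont_of_der. auto_derive. auto.
    apply continuous_sqrt.
Qed.

Lemma E_odd x : E (- x) = - E x.
Proof.
  assert (H : is_RInt (fun y => opp (gf (- y))) 0 x (RInt gf (- 0) (- x))).
  { apply (@is_RInt_comp_opp R_NormedModule). apply (@RInt_correct R_CompleteNormedModule), gf_exRInt. }
  rewrite Ropp_0 in H. unfold E. rewrite <- (is_RInt_unique _ _ _ _ H).
  rewrite (RInt_ext _ (fun y => opp (gf y))).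
  - rewrite (@RInt_opp R_CompleteNormedModule). reflexivity. apply gf_exRInt.
  - intros. unfold gf. f_equal. f_equal. f_equal. ring.
Qed.

Lemma E_lim_m : is_lim E m_infty (- (sqrt PI / 2)).
Proof.
  apply (is_lim_ext (fun x => - E (- x))).
  { intros. rewrite E_odd. ring. }
  replace (Finite (- (sqrt PI / 2))) with (Rbar_opp (sqrt PI / 2)) by reflexivity.
  apply is_lim_opp.
  eapply is_lim_comp. apply E_lim_p.
  replace p_infty with (Rbar_opp m_infty) by reflexivity. apply is_lim_opp, is_lim_id.
  exists 0. intros; discriminate.
Qed.

Lemma RInt_gen_antider (F f : R -> R) (la lb : R) :
  (forall x, is_derive F x (f x)) -> (forall x, continuous f x) ->
  is_lim F m_infty la -> is_lim F p_infty lb ->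
  is_RInt_gen f (Rbar_locally m_infty) (Rbar_locally p_infty) (lb - la).
Proof.
  intros HF Hc Hm Hp.
  assert (HD : forall x, Derive F x = f x) by (intros; apply is_derive_unique, HF).
  apply (is_RInt_gen_ext (Derive F)).
  - apply filter_forall. intros ab x _. apply HD.
  - apply is_RInt_gen_Derive.
    + apply filter_forall. intros ab x _. eexists; apply HF.
    + apply filter_forall. intros ab x _. apply (continuous_ext f). intros; symmetry; apply HD. apply Hc.
    + exact Hm.
    + exact Hp.
Qed.

Definition gexp (c tau x : R) := exp (- (x - c) ^ 2 / (2 * tau ^ 2)).

Lemma sqrt2_pos : 0 < sqrt 2.
Proof. apply sqrt_lt_R0. lra. Qed.

Lemma gexp_gf c tau x : 0 < tau -> gexp c tau x = gf ((x - c) / (tau * sqrt 2)).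
Proof.
  intros Ht. assert (H2 := sqrt2_pos). unfold gexp, gf. f_equal.
  replace (((x - c) / (tau * sqrt 2)) ^ 2) with ((x - c) ^ 2 / (tau ^ 2 * (sqrt 2 * sqrt 2))) by (field; lra).
  rewrite sqrt_sqrt by lra. field. lra.
Qed.

Lemma lin_lim a c (z : Rbar) : 0 < a -> z = p_infty \/ z = m_infty -> is_lim (fun x => (x - c) / a) z z.
Proof.
  intros Ha Hz. destruct Hz; subst.
  - intros P [M HM]. exists (M * a + c). intros x Hx. apply HM.
    apply (Rmult_lt_reg_r a); auto. unfold Rdiv. rewrite Rmult_assoc, Rinv_l by lra. lra.
  - intros P [M HM]. exists (M * a + c). intros x Hx. apply HM.
    apply (Rmult_lt_reg_r a); auto. unfold Rdiv. rewrite Rmult_assoc, Rinv_l by lra. lra.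
Qed.

Lemma gexp_lim c tau (z : Rbar) : 0 < tau -> z = p_infty \/ z = m_infty -> is_lim (gexp c tau) z 0.
Proof.
  intros Ht Hz. assert (H2 := sqrt2_pos).
  apply (is_lim_ext (fun x => gf ((x - c) / (tau * sqrt 2)))).
  { intros; symmetry; apply gexp_gf; auto. }
  eapply is_lim_comp. apply (lim_gf z Hz). apply lin_lim; auto. nra.
  destruct Hz; subst; exists 0; intros; discriminate.
Qed.

Lemma gexp_cont c tau x : continuous (gexp c tau) x.
Proof. apply cont_of_der. unfold gexp. auto_derive. auto. Qed.

Lemma is_derive_val (f : R -> R) x l l' : is_derive f x l -> l = l' -> is_derive f x l'.
Proof. intros H ->; exact H. Qed.

Definition F1 c tau x := tau * sqrt 2 * E ((x - c) / (tau * sqrt 2)).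

Lemma F1_deriv c tau x : 0 < tau -> is_derive (F1 c tau) x (gexp c tau x).
Proof.
  intros Ht. assert (H2 := sqrt2_pos). set (a := tau * sqrt 2).
  assert (Ha : 0 < a) by (unfold a; nra).
  assert (H1 : is_derive (fun x => (x - c) / a) x (/ a)) by (auto_derive; [auto | field; lra]).
  assert (H3 := is_derive_comp E (fun x => (x - c) / a) x _ _ (E_deriv _) H1).
  assert (H4 := is_derive_scal _ x a _ H3).
  unfold F1. fold a. simpl in H4. eapply is_derive_val. apply H4.
  unfold scal; simpl; unfold mult; simpl. rewrite gexp_gf by auto. fold a. field. lra.
Qed.

Definition F2 c tau x := - tau ^ 2 * gexp c tau x + c * F1 c tau x.

Lemma F2_deriv c tau x : 0 < tau -> is_derive (F2 c tau) x (x * gexp c tau x).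
Proof.
  intros Ht. unfold F2.
  eapply is_derive_val.
  apply (@is_derive_plus R_AbsRing R_NormedModule).
  apply is_derive_scal. unfold gexp. apply (is_derive_comp exp (fun x => - (x - c) ^ 2 / (2 * tau ^ 2))).
  apply is_derive_exp. auto_derive. auto. reflexivity.
  apply is_derive_scal. apply F1_deriv; auto.
  unfold plus, scal; simpl; unfold plus, mult; simpl. unfold gexp. replace (- ((x - c) * ((x - c) * 1)) / (2 * (tau * (tau * 1)))) with (- (x - c) ^ 2 / (2 * tau ^ 2)) by (field; lra). match goal with |- ?a = ?b => change (@eq R a b) end. field. lra.
Qed.

Ltac fR := match goal with |- ?a = ?b => change (@eq R a b) end.

Lemma F1_lim c tau (z : Rbar) s : 0 < tau -> (z = p_infty /\ s = 1) \/ (z = m_infty /\ s = -1) ->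
  is_lim (F1 c tau) z (tau * sqrt 2 * (s * (sqrt PI / 2))).
Proof.
  intros Ht Hz. assert (H2 := sqrt2_pos).
  unfold F1. apply (is_lim_scal_l _ _ _ (s * (sqrt PI / 2))).
  destruct Hz as [[-> ->] | [-> ->]].
  - eapply is_lim_comp. replace (1 * (sqrt PI / 2)) with (sqrt PI / 2) by ring. apply E_lim_p.
    apply lin_lim; auto. nra. exists 0; intros; discriminate.
  - eapply is_lim_comp. replace (-1 * (sqrt PI / 2)) with (- (sqrt PI / 2)) by ring. apply E_lim_m.
    apply lin_lim; auto. nra. exists 0; intros; discriminate.
Qed.

Notation mi := (Rbar_locally m_infty).
Notation pi := (Rbar_locally p_infty).

Lemma gint c tau : 0 < tau -> is_RInt_gen (gexp c tau) mi pi (tau * sqrt 2 * sqrt PI).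
Proof.
  intros Ht.
  replace (tau * sqrt 2 * sqrt PI) with (tau * sqrt 2 * (1 * (sqrt PI / 2)) - tau * sqrt 2 * (-1 * (sqrt PI / 2))) by field.
  apply (RInt_gen_antider (F1 c tau)).
  - intros; apply F1_deriv; auto.
  - intros; apply gexp_cont.
  - apply F1_lim; auto.
  - apply F1_lim; auto.
Qed.

Lemma gmom c tau : 0 < tau -> is_RInt_gen (fun x => x * gexp c tau x) mi pi (c * (tau * sqrt 2 * sqrt PI)).
Proof.
  intros Ht.
  replace (c * (tau * sqrt 2 * sqrt PI)) with
    ((- tau ^ 2 * 0 + c * (tau * sqrt 2 * (1 * (sqrt PI / 2)))) - (- tau ^ 2 * 0 + c * (tau * sqrt 2 * (-1 * (sqrt PI / 2))))) by field.
  apply (RInt_gen_antider (F2 c tau)).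
  - intros; apply F2_deriv; auto.
  - intros. apply cont_of_der. unfold gexp. auto_derive. auto.
  - unfold F2. eapply is_lim_plus. apply (is_lim_scal_l _ _ _ 0). apply gexp_lim; auto.
    apply (is_lim_scal_l _ _ _ (tau * sqrt 2 * (-1 * (sqrt PI / 2)))). apply F1_lim; auto. reflexivity.
  - unfold F2. eapply is_lim_plus. apply (is_lim_scal_l _ _ _ 0). apply gexp_lim; auto.
    apply (is_lim_scal_l _ _ _ (tau * sqrt 2 * (1 * (sqrt PI / 2)))). apply F1_lim; auto. reflexivity.
Qed.

Lemma RIg_change (f g : R -> R) l l' : (forall t, f t = g t) -> l = l' ->
  is_RInt_gen f mi pi l -> is_RInt_gen g mi pi l'.
Proof.
  intros Hfg <- H. apply (is_RInt_gen_ext f). apply filter_forall. intros; apply Hfg. exact H.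
Qed.

Lemma RIg_scal (f : R -> R) k l : is_RInt_gen f mi pi l -> is_RInt_gen (fun t => k * f t) mi pi (k * l).
Proof. intros H. apply (is_RInt_gen_scal f k l H). Qed.

Lemma sqrt2PI : sqrt (2 * PI) = sqrt 2 * sqrt PI.
Proof. apply sqrt_mult. lra. apply Rlt_le, PI_RGT_0. Qed.

Lemma sqrtPI_pos : 0 < sqrt PI.
Proof. apply sqrt_lt_R0, PI_RGT_0. Qed.

Lemma g0_int s0 : 0 < s0 -> is_RInt_gen (fun t => gauss 0 s0 t) mi pi 1.
Proof.
  intros H. assert (H2 := sqrt2_pos). assert (H3 := sqrtPI_pos).
  apply (RIg_change (fun t => / (s0 * sqrt (2 * PI)) * gexp 0 s0 t) _ (/ (s0 * sqrt (2 * PI)) * (s0 * sqrt 2 * sqrt PI))).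
  - intros; reflexivity.
  - rewrite sqrt2PI. fR. field. repeat split; lra.
  - apply RIg_scal, gint; auto.
Qed.

Lemma g0_mom s0 : 0 < s0 -> is_RInt_gen (fun t => t * gauss 0 s0 t) mi pi 0.
Proof.
  intros H. assert (H2 := sqrt2_pos). assert (H3 := sqrtPI_pos).
  apply (RIg_change (fun t => / (s0 * sqrt (2 * PI)) * (t * gexp 0 s0 t)) _ (/ (s0 * sqrt (2 * PI)) * (0 * (s0 * sqrt 2 * sqrt PI)))).
  - intros; unfold gauss, gexp. fR. ring.
  - fR. ring.
  - apply RIg_scal, gmom; auto.
Qed.

Lemma conv_pt s0 se x t : 0 < s0 -> 0 < se ->
  gauss 0 s0 t * gauss t se x =
  (/ (s0 * sqrt (2 * PI)) * / (se * sqrt (2 * PI)) * exp (- x ^ 2 / (2 * (s0 ^ 2 + se ^ 2))))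
  * gexp (x * s0 ^ 2 / (s0 ^ 2 + se ^ 2)) (s0 * se / sqrt (s0 ^ 2 + se ^ 2)) t.
Proof.
  intros H0 He. assert (HS : 0 < s0 ^ 2 + se ^ 2) by nra.
  assert (HSS : sqrt (s0 ^ 2 + se ^ 2) * sqrt (s0 ^ 2 + se ^ 2) = s0 ^ 2 + se ^ 2) by (apply sqrt_sqrt; lra).
  assert (HSp : 0 < sqrt (s0 ^ 2 + se ^ 2)) by (apply sqrt_lt_R0; lra).
  unfold gauss, gexp.
  replace ((s0 * se / sqrt (s0 ^ 2 + se ^ 2)) ^ 2) with (s0 ^ 2 * se ^ 2 / (s0 ^ 2 + se ^ 2)).
  2:{ generalize HSS HSp. generalize (sqrt (s0 ^ 2 + se ^ 2)). intros S HS1 HS2. rewrite <- HS1. field. lra. }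
  assert (Hx : exp (- (t - 0) ^ 2 / (2 * s0 ^ 2)) * exp (- (x - t) ^ 2 / (2 * se ^ 2)) =
     exp (- x ^ 2 / (2 * (s0 ^ 2 + se ^ 2))) * exp (- (t - x * s0 ^ 2 / (s0 ^ 2 + se ^ 2)) ^ 2 / (2 * (s0 ^ 2 * se ^ 2 / (s0 ^ 2 + se ^ 2))))).
  { rewrite <- !exp_plus. f_equal. field. lra. }
  transitivity (/ (s0 * sqrt (2 * PI)) * / (se * sqrt (2 * PI)) *
     (exp (- (t - 0) ^ 2 / (2 * s0 ^ 2)) * exp (- (x - t) ^ 2 / (2 * se ^ 2)))). ring.
  rewrite Hx. ring.
Qed.

Lemma conv_int s0 se x : 0 < s0 -> 0 < se ->
  is_RInt_gen (fun t => gauss 0 s0 t * gauss t se x) mi pi (gauss 0 (sqrt (s0 ^ 2 + se ^ 2)) x).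
Proof.
  intros H0 He. assert (HS : 0 < s0 ^ 2 + se ^ 2) by nra.
  assert (HSp : 0 < sqrt (s0 ^ 2 + se ^ 2)) by (apply sqrt_lt_R0; lra).
  assert (H2 := sqrt2_pos). assert (H3 := sqrtPI_pos).
  set (K := / (s0 * sqrt (2 * PI)) * / (se * sqrt (2 * PI)) * exp (- x ^ 2 / (2 * (s0 ^ 2 + se ^ 2)))).
  set (mu := x * s0 ^ 2 / (s0 ^ 2 + se ^ 2)).
  set (tau := s0 * se / sqrt (s0 ^ 2 + se ^ 2)).
  assert (Ht : 0 < tau) by (unfold tau; apply Rdiv_lt_0_compat; nra).
  apply (RIg_change (fun t => K * gexp mu tau t) _ (K * (tau * sqrt 2 * sqrt PI))).
  - intros; symmetry; apply conv_pt; auto.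
  - unfold K, tau, gauss. rewrite pow2_sqrt by lra. replace (x - 0) with x by ring.
    rewrite sqrt2PI. fR. field. repeat split; lra.
  - apply RIg_scal, gint; auto.
Qed.

Lemma conv_mom s0 se x : 0 < s0 -> 0 < se ->
  is_RInt_gen (fun t => t * gauss 0 s0 t * gauss t se x) mi pi
    (x * s0 ^ 2 / (s0 ^ 2 + se ^ 2) * gauss 0 (sqrt (s0 ^ 2 + se ^ 2)) x).
Proof.
  intros H0 He. assert (HS : 0 < s0 ^ 2 + se ^ 2) by nra.
  assert (HSp : 0 < sqrt (s0 ^ 2 + se ^ 2)) by (apply sqrt_lt_R0; lra).
  assert (H2 := sqrt2_pos). assert (H3 := sqrtPI_pos).
  set (K := / (s0 * sqrt (2 * PI)) * / (se * sqrt (2 * PI)) * exp (- x ^ 2 / (2 * (s0 ^ 2 + se ^ 2)))).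
  set (mu := x * s0 ^ 2 / (s0 ^ 2 + se ^ 2)).
  set (tau := s0 * se / sqrt (s0 ^ 2 + se ^ 2)).
  assert (Ht : 0 < tau) by (unfold tau; apply Rdiv_lt_0_compat; nra).
  apply (RIg_change (fun t => K * (t * gexp mu tau t)) _ (K * (mu * (tau * sqrt 2 * sqrt PI)))).
  - intros. rewrite Rmult_assoc, conv_pt by auto. fold K mu tau. fR. ring.
  - unfold K, tau, gauss. rewrite pow2_sqrt by lra. replace (x - 0) with x by ring.
    rewrite sqrt2PI. fR. field. repeat split; lra.
  - apply RIg_scal, gmom; auto.
Qed.

Lemma gauss_pos mu s x : 0 < s -> 0 < gauss mu s x.
Proof.
  intros Hs. unfold gauss. apply Rmult_lt_0_compat. apply Rinv_0_lt_compat.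
  apply Rmult_lt_0_compat; auto. apply sqrt_lt_R0. assert (PI > 0) by apply PI_RGT_0. lra.
  apply exp_pos.
Qed.

Lemma L_nonneg (phi Delta sig : nat -> R) n x : (forall i, (i < n)%nat -> 0 < sig i) -> (forall i, (i < n)%nat -> 0 <= phi i) ->
  0 <= fsum n (fun i => phi i * gauss (Delta i) (sig i) x).
Proof.
  induction n; intros Hs Hp; simpl. lra.
  apply Rplus_le_le_0_compat. apply IHn; intros; [apply Hs | apply Hp]; lia.
  apply Rmult_le_pos. apply Hp; lia. apply Rlt_le, gauss_pos, Hs; lia.
Qed.

Lemma L_ex (phi Delta sig : nat -> R) n x : ex_derive (fun x => fsum n (fun i => phi i * gauss (Delta i) (sig i) x)) x.
Proof.
  induction n; simpl.
  - apply ex_derive_const.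
  - apply (@ex_derive_plus R_AbsRing R_NormedModule). apply IHn. unfold gauss. auto_derive. auto.
Qed.

Lemma L0_eq (phi Delta sig : nat -> R) phie S n : 0 < phie -> 0 < S -> (forall i, (i < n)%nat -> 0 < sig i) ->
  fsum n (fun i => phi i * gauss (Delta i) (sig i) 0) =
  phie * gauss 0 S 0 * fsum n (fun i => phi i / phie * (S / sig i) * exp (- Delta i ^ 2 / (2 * sig i ^ 2))).
Proof.
  intros Hp HS Hs. assert (H3 := sqrtPI_pos). assert (H2 := sqrt2_pos).
  induction n; cbn [fsum]. ring.
  rewrite IHn by (intros; apply Hs; lia). assert (Hn : 0 < sig n) by (apply Hs; lia).
  unfold gauss. replace ((0 - 0) ^ 2) with 0 by ring. replace ((0 - Delta n) ^ 2) with (Delta n ^ 2) by ring.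
  replace (- 0 / (2 * S ^ 2)) with 0 by (field; lra). rewrite exp_0. rewrite sqrt2PI. fR. field. repeat split; lra.
Qed.

Lemma post_mean_eq (s0 : R) (k : nat) (phie se : R) (phi Delta sig : nat -> R) x :
  0 < s0 -> 0 < se ->
  post_mean s0 k phie se phi Delta sig x =
  (phie * (x * s0 ^ 2 / (s0 ^ 2 + se ^ 2) * gauss 0 (sqrt (s0 ^ 2 + se ^ 2)) x)
     + fsum k (fun i => phi i * gauss (Delta i) (sig i) x) * 0)
  / (phie * gauss 0 (sqrt (s0 ^ 2 + se ^ 2)) x + fsum k (fun i => phi i * gauss (Delta i) (sig i) x) * 1).
Proof.
  intros H0 He. unfold post_mean.
  set (L := fsum k (fun i => phi i * gauss (Delta i) (sig i) x)).
  f_equal.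
  - apply is_RInt_gen_unique.
    apply (RIg_change (fun t => plus (phie * (t * gauss 0 s0 t * gauss t se x)) (L * (t * gauss 0 s0 t))) _
             (plus (phie * (x * s0 ^ 2 / (s0 ^ 2 + se ^ 2) * gauss 0 (sqrt (s0 ^ 2 + se ^ 2)) x)) (L * 0))).
    + intros. unfold lik, plus; simpl. fold L. fR. ring.
    + reflexivity.
    + apply (is_RInt_gen_plus (V:=R_NormedModule)). apply RIg_scal, conv_mom; auto. apply RIg_scal, g0_mom; auto.
  - apply is_RInt_gen_unique.
    apply (RIg_change (fun t => plus (phie * (gauss 0 s0 t * gauss t se x)) (L * gauss 0 s0 t)) _
             (plus (phie * gauss 0 (sqrt (s0 ^ 2 + se ^ 2)) x) (L * 1))).
    + intros. unfold lik, plus; simpl. fold L. fR. ring.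
    + reflexivity.
    + apply (is_RInt_gen_plus (V:=R_NormedModule)). apply RIg_scal, conv_int; auto. apply RIg_scal, g0_int; auto.
Qed.

Theorem mainTheorem10 (k : nat) (s0 se phie : R) (phi Delta sig : nat -> R) :
  0 < s0 -> 0 < se -> 0 < phie ->
  (forall i, (i < k)%nat -> 0 < sig i) ->
  (forall i, (i < k)%nat -> 0 <= phi i) ->
  phie + fsum k phi = 1 ->
  is_derive (post_mean s0 k phie se phi Delta sig) 0
    ((s0 ^ 2 / (s0 ^ 2 + se ^ 2)) /
     (1 + fsum k (fun i => phi i / phie * (sqrt (s0 ^ 2 + se ^ 2) / sig i)
                           * exp (- Delta i ^ 2 / (2 * sig i ^ 2))))).
Proof.
  intros H0 He Hp Hs Hphi _.
  assert (HS : 0 < s0 ^ 2 + se ^ 2) by nra.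
  assert (HSp : 0 < sqrt (s0 ^ 2 + se ^ 2)) by (apply sqrt_lt_R0; lra).
  set (S := sqrt (s0 ^ 2 + se ^ 2)) in *.
  set (m := fun x => gauss 0 S x).
  set (L := fun x => fsum k (fun i => phi i * gauss (Delta i) (sig i) x)).
  set (H := fun x => phie * (s0 ^ 2 / (s0 ^ 2 + se ^ 2)) * m x / (phie * m x + L x)).
  assert (Hden : forall x, 0 < phie * m x + L x).
  { intros x. assert (0 < m x) by (apply gauss_pos; auto). assert (0 <= L x) by (apply L_nonneg; auto).
    nra. }
  assert (Hext : forall x, x * H x = post_mean s0 k phie se phi Delta sig x).
  { intros x. rewrite post_mean_eq by auto. fold S. unfold H. fold (m x). fold (L x).
    specialize (Hden x). field. lra. }
  apply (is_derive_ext _ _ _ _ Hext).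
  assert (HexH : ex_derive H 0).
  { unfold H. apply ex_derive_div.
    - apply ex_derive_scal. unfold m, gauss. auto_derive. auto.
    - apply (@ex_derive_plus R_AbsRing R_NormedModule). apply ex_derive_scal. unfold m, gauss. auto_derive. auto.
      apply L_ex.
    - specialize (Hden 0). lra. }
  eapply is_derive_val.
  apply (@is_derive_mult R_AbsRing (fun x => x) H 0 1 (Derive H 0)).
  - apply (@is_derive_id R_AbsRing).
  - apply Derive_correct, HexH.
  - intros; simpl. unfold mult; simpl. ring.
  - unfold plus, mult; simpl. unfold H, L, m.
    rewrite (L0_eq phi Delta sig phie S k) by auto.
    assert (HL := L0_eq phi Delta sig phie S k Hp HSp Hs).
    specialize (Hden 0). unfold L, m in Hden. rewrite HL in Hden.
    assert (Hm0 : 0 < gauss 0 S 0) by (apply gauss_pos; auto).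
    set (Z := fsum k _) in *.
    assert (1 + Z <> 0).
    { intro HZ. replace (phie * gauss 0 S 0 + phie * gauss 0 S 0 * Z) with (phie * gauss 0 S 0 * (1 + Z)) in Hden by ring.
      rewrite HZ in Hden. lra. }
    fR. field. split; [nra | split; [auto | lra]].
Qed.
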